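(* For all integers $2\le n\le m$, \[ \gamma_{2t}(K_n\Box K_m)\le\gamma_{2t}(K_n\Box K_{m+1})\le\gamma_{2t}(K_n\Box K_m)+1 \] and \[ \gamma_{2t}(K_n\Box K_m)\le\gamma_{2t}(K_{n+1}\Box K_m)\le\gamma_{2t}(K_n\Box K_m)+2. \]
   Context: For a graph $G=(V,E)$, a set $S\subseteq V$ is a total $2$-dominating set if every vertex of $V$ (including those in $S$) is adjacent to at least $2$ vertices of $S$; $\gamma_{2t}(G)$ is the minimum cardinality of such a set. $G\Box H$ denotes the Cartesian product: vertex set $V(G)\times V(H)$, with $(u_1,v_1)\sim(u_2,v_2)$ iff either $u_1=u_2$ and $v_1\sim v_2$, or $v_1=v_2$ and $u_1\sim u_2$. $K_n$ is the complete graph on $n$ vertices. *)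

(* Defs.v *)
From mathcomp Require Import all_boot.
Set Implicit Arguments. Unset Strict Implicit. Unset Printing Implicit Defensive.

Definition total_k_dominating (T : finType) (e : rel T) (k : nat) (S : {set T}) : bool :=
  [forall v : T, k <= #|[set u in S | e v u]|].

(* gamma_{kt}(G): minimum cardinality of a total k-dominating set
   (defaults to #|T| if none exists; it always exists in the cases used here). *)
Definition gamma_kt (T : finType) (e : rel T) (k : nat) : nat :=
  \big[minn/#|T|]_(S : {set T} | total_k_dominating e k S) #|S|.

Definition gamma_2t (T : finType) (e : rel T) : nat := gamma_kt e 2.

Definition complete_rel (n : nat) : rel 'I_n := fun i j => i != j.

Definition cart_rel (A B : finType) (eA : rel A) (eB : rel B) : rel (A * B) :=
  fun x y => ((x.1 == y.1) && eB x.2 y.2) || ((x.2 == y.2) && eA x.1 y.1).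

Definition g2t_KK (n m : nat) : nat :=
  gamma_2t (@cart_rel (ordinal n) (ordinal m) (@complete_rel n) (@complete_rel m)).

(* Main.v *)
Require Import Defs.
From mathcomp Require Import all_boot zify.
Set Implicit Arguments. Unset Strict Implicit. Unset Printing Implicit Defensive.

Section Gen.
Variables (T : finType) (e : rel T) (k : nat).

Lemma bigmin_le_seq (I : eqType) (s : seq I) (P : pred I) (F : I -> nat) d x :
  x \in s -> P x -> \big[minn/d]_(i <- s | P i) F i <= F x.
Proof.
elim: s => // y s IH; rewrite inE big_cons => /orP [/eqP <-|Hx] Px.
  by rewrite Px geq_minl.
case: ifP => _; last exact: IH.
exact: leq_trans (geq_minr _ _) (IH Hx Px).
Qed.

Lemma gamma_le S : total_k_dominating e k S -> gamma_kt e k <= #|S|.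
Proof. by move=> HS; apply: bigmin_le_seq => //; rewrite mem_index_enum. Qed.

Lemma gamma_cases : gamma_kt e k = #|T| \/
  exists S, total_k_dominating e k S /\ #|S| = gamma_kt e k.
Proof.
rewrite /gamma_kt; apply: (big_ind (fun x => x = #|T| \/ exists S, total_k_dominating e k S /\ #|S| = x)).
- by left.
- move=> x y Hx Hy; rewrite /minn; case: ifP => _; [exact Hx| exact Hy].
- by move=> S HS; right; exists S.
Qed.

Lemma gamma_leT : gamma_kt e k <= #|T|.
Proof.
case: gamma_cases => [->//|[S [_ <-]]]; exact: max_card.
Qed.

Lemma gamma_ex : (exists S, total_k_dominating e k S) ->
  exists S, total_k_dominating e k S /\ #|S| = gamma_kt e k.
Proof.
move=> [S0 H0]; case: gamma_cases => [E|//]; exists S0; split=> //.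
by apply/eqP; rewrite eqn_leq gamma_le // E max_card.
Qed.
End Gen.

Lemma gamma_mono (T T' : finType) (e : rel T) (e' : rel T') k :
  (forall S, total_k_dominating e k S -> gamma_kt e' k <= #|S|) ->
  #|T'| <= #|T| -> gamma_kt e' k <= gamma_kt e k.
Proof.
move=> H HT; case: (gamma_cases e k) => [->|[S [HS <-]]]; last exact: H.
exact: leq_trans (gamma_leT _ _) HT.
Qed.

Lemma tkd_img (T T' : finType) (e : rel T) (e' : rel T') k (h : T -> T') S :
  total_k_dominating e k S -> {in S &, injective h} ->
  (forall u w, e u w -> h u = h w \/ e' (h u) (h w)) ->
  (forall v, ~~ e v v) -> (forall v', exists v, h v = v') ->
  total_k_dominating e' k (h @: S).
Proof.
move=> /forallP HS hinj hom irr sur; apply/forallP => v'.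
have [v0 [hv0 Hv0]] : exists v0, h v0 = v' /\ (v' \in h @: S -> v0 \in S).
  case: (boolP (v' \in h @: S)) => [/imsetP [v0 Hv0 ->]|_].
    by exists v0.
  by case: (sur v') => v0 <-; exists v0.
apply: leq_trans (HS v0) _.
rewrite -(card_in_imset (f := h)); last first.
  by move=> x y; rewrite !inE => /andP [Hx _] /andP [Hy _]; apply: hinj.
apply: subset_leq_card; apply/subsetP => w /imsetP [u]; rewrite !inE => /andP [Hu Heu] ->.
rewrite imset_f //=.
case: (hom _ _ Heu) => [E|]; last by rewrite hv0.
exfalso.
case: (boolP (v' \in h @: S)) => Hin.
  have Hv0S := Hv0 Hin.
  have := hinj _ _ Hv0S Hu E => Eu; subst u.
  by rewrite (negbTE (irr v0)) in Heu.
by move: Hin; rewrite -hv0 E imset_f.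
Qed.

Lemma tkd_preim (T T' : finType) (e : rel T) (e' : rel T') k (h : T -> T') S :
  total_k_dominating e' k S ->
  (forall v w', e' (h v) w' -> exists2 u, h u = w' & e v u) ->
  total_k_dominating e k (h @^-1: S).
Proof.
move=> /forallP HS lift; apply/forallP => v.
apply: leq_trans (HS (h v)) _.
apply: (leq_trans _ (leq_imset_card h _)).
apply: subset_leq_card; apply/subsetP => w; rewrite inE => /andP [Hw He].
case: (lift _ _ He) => u Hu Heu.
by apply/imsetP; exists u; rewrite // !inE Hu Hw.
Qed.


Notation E n m := (@cart_rel (ordinal n) (ordinal m) (@complete_rel n) (@complete_rel m)).

Lemma irrE n m (v : 'I_n * 'I_m) : ~~ E n m v v.
Proof. by rewrite /cart_rel /complete_rel !eqxx. Qed.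

Lemma homE n m m' (f : 'I_m' -> 'I_m) (u w : 'I_n * 'I_m') :
  E n m' u w -> (u.1, f u.2) = (w.1, f w.2) \/ E n m (u.1, f u.2) (w.1, f w.2).
Proof.
rewrite /cart_rel /complete_rel /= => /orP [/andP [/eqP -> _]|/andP [/eqP -> H]].
  by case: (eqVneq (f u.2) (f w.2)) => [->|H]; [left|right; rewrite eqxx].
by right; rewrite H eqxx orbT.
Qed.

Lemma transp n m : g2t_KK n m = g2t_KK m n.
Proof.
have H : forall a b, g2t_KK a b <= g2t_KK b a.
  move=> a b; apply: gamma_mono; last by rewrite !card_prod mulnC.
  move=> S HS; apply: (leq_trans (gamma_le (S := [set (p.2, p.1) | p in S]) _)).
    apply: (tkd_img HS).
    - by move=> [x y] [x' y'] _ _ [-> ->].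
    - move=> [x y] [x' y']; rewrite /cart_rel /= => H; right.
      by rewrite orbC.
    - by move=> v; rewrite irrE.
    - by move=> [x y]; exists (y, x).
  exact: leq_imset_card.
by apply/eqP; rewrite eqn_leq !H.
Qed.

Lemma two_le (T : finType) (a b : T) (A : {set T}) :
  a != b -> a \in A -> b \in A -> 2 <= #|A|.
Proof.
move=> Hab Ha Hb; rewrite (cardsD1 a) Ha (cardsD1 b (A :\ a)) !inE eq_sym Hab Hb.
by [].
Qed.

Lemma ub n m : 2 <= n -> 2 <= m ->
  exists S, total_k_dominating (E n m) 2 S /\ #|S| = (2 * n)%N.
Proof.
move=> Hn Hm.
have [c1 [c2 c12]] : exists c1 c2 : 'I_m, c1 != c2.
  by exists (Ordinal (ltn_trans (ltnSn 0) Hm)), (Ordinal Hm).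
have [r1 [r2 r12]] : exists r1 r2 : 'I_n, r1 != r2.
  by exists (Ordinal (ltn_trans (ltnSn 0) Hn)), (Ordinal Hn).
exists (setX [set: 'I_n] [set c1; c2]); split; last first.
  by rewrite cardsX cardsT card_ord cards2 c12 mulnC.
apply/forallP => [[x y]].
case: (boolP (y \in [set c1; c2])) => Hy.
  have [c' [Hc' Hyc']] : exists c', c' \in [set c1; c2] /\ y != c'.
    move: (Hy); rewrite !inE => /orP [/eqP ->|/eqP ->]; [exists c2|exists c1];
      rewrite !inE eqxx ?orbT; split => //; first [exact c12 | rewrite eq_sym; exact c12].
  have [x' Hx'] : exists x', x != x'.
    by case: (eqVneq x r1) => [->|H]; [exists r2|exists r1; rewrite ?H].
  have Hy' := Hy; rewrite !inE in Hc' Hy'.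
  apply: (two_le (a := (x, c')) (b := (x', y))).
  - by rewrite xpair_eqE negb_and Hx'.
  - by rewrite !inE /cart_rel /complete_rel /= Hc' eqxx Hyc'.
  - by rewrite !inE /cart_rel /complete_rel /= Hy' eqxx andbF /=; exact: Hx'.
have Hy1 : y != c1 by move: Hy; rewrite !inE negb_or => /andP [].
have Hy2 : y != c2 by move: Hy; rewrite !inE negb_or => /andP [].
apply: (two_le (a := (x, c1)) (b := (x, c2))).
- by rewrite xpair_eqE eqxx /=; exact: c12.
- by rewrite !inE /cart_rel /complete_rel /= !eqxx eq_sym Hy1.
- by rewrite !inE /cart_rel /complete_rel /= !eqxx eq_sym Hy2 orbT.
Qed.

Lemma ubG n m : 2 <= n -> 2 <= m -> g2t_KK n m <= 2 * n.
Proof. by move=> Hn Hm; case: (ub Hn Hm) => S [HS <-]; exact: gamma_le. Qed.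

Lemma ubG' n m : 2 <= n -> 2 <= m -> g2t_KK n m <= 2 * m.
Proof. by move=> Hn Hm; rewrite transp; exact: ubG. Qed.

Lemma pair_inj1 (A B : Type) (y : B) : injective (fun x : A => (x, y)).
Proof. by move=> a b [].  Qed.
Lemma pair_inj2 (A B : Type) (x : A) : injective (fun y : B => (x, y)).
Proof. by move=> a b [].  Qed.

Lemma count_cols n m (S : {set 'I_n * 'I_m}) :
  #|S| = \sum_(y : 'I_m) #|[set x | (x, y) \in S]|.
Proof.
rewrite -sum1_card (partition_big snd xpredT) //=.
apply: eq_bigr => y _.
rewrite -(card_imset _ (@pair_inj1 'I_n 'I_m y)) -sum1_card.
apply: eq_bigl => p; apply/andP/imsetP => [[Hp /eqP Hy]|[x]].
  by exists p.1; rewrite ?inE -Hy -?surjective_pairing.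
by rewrite inE => Hx ->.
Qed.

Lemma count_rows n m (S : {set 'I_n * 'I_m}) :
  #|S| = \sum_(x : 'I_n) #|[set y | (x, y) \in S]|.
Proof.
rewrite -sum1_card (partition_big fst xpredT) //=.
apply: eq_bigr => x _.
rewrite -(card_imset _ (@pair_inj2 'I_n 'I_m x)) -sum1_card.
apply: eq_bigl => p; apply/andP/imsetP => [[Hp /eqP Hx]|[y]].
  by exists p.2; rewrite ?inE -Hx -?surjective_pairing.
by rewrite inE => Hy ->.
Qed.


Lemma card_setU_le (T : finType) (A B : {set T}) : #|A :|: B| <= #|A| + #|B|.
Proof. by rewrite -cardsUI leq_addr. Qed.

Lemma dup a b t : 2 <= a -> 2 <= b -> g2t_KK a b.+1 <= t.+1 * b ->
  g2t_KK a b.+1 <= g2t_KK a b + t.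
Proof.
move=> Ha Hb Hub.
have [S [HS HSc]] : exists S, total_k_dominating (E a b) 2 S /\ #|S| = g2t_KK a b.
  apply: gamma_ex; case: (ub Ha Hb) => S [HS _]; by exists S.
rewrite -HSc.
case: (boolP [exists k : 'I_b, #|[set x | (x, k) \in S]| <= t]) => [/existsP [k Hk]|/existsPn Hall].
- pose f (y : 'I_b.+1) : 'I_b := if unlift ord_max y is Some z then z else k.
  have fK : forall z, f (lift ord_max z) = z by move=> z; rewrite /f liftK.
  pose h (p : 'I_a * 'I_b.+1) : 'I_a * 'I_b := (p.1, f p.2).
  have HS' : total_k_dominating (E a b.+1) 2 (h @^-1: S).
    apply: (tkd_preim HS) => [[x y'] [x2 y2]].
    rewrite /h /cart_rel /complete_rel /= => /orP [/andP [/eqP <- Hne]|/andP [/eqP <- Hne]].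
      exists (x, lift ord_max y2); first by rewrite /h /= fK.
      rewrite /= eqxx /=; apply/orP; left; apply/eqP => E1.
      by move: Hne; rewrite E1 fK eqxx.
    by exists (x2, y'); rewrite //= eqxx Hne orbT.
  apply: (leq_trans (gamma_le HS')).
  apply: (@leq_trans #|[set (p.1, lift ord_max p.2) | p in S] :|:
                       [set (x, ord_max) | x in [set x | (x, k) \in S]]|).
    apply: subset_leq_card; apply/subsetP => [[x y]]; rewrite inE /h /= => Hxy.
    rewrite inE; move: Hxy; case: (unliftP ord_max y) => [z ->|->] Hxy.
      by apply/orP; left; apply/imsetP; exists (x, z); rewrite // -(fK z).
    apply/orP; right; apply/imsetP; exists x => //.
    by rewrite inE; move: Hxy; rewrite /f unlift_none.
  apply: (leq_trans (card_setU_le _ _)); apply: leq_add.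
    exact: leq_imset_card.
  exact: leq_trans (leq_imset_card _ _) Hk.
- apply: (leq_trans Hub); apply: (leq_trans _ (leq_addr _ _)).
  rewrite count_cols.
  apply: (@leq_trans (\sum_(y : 'I_b) t.+1)).
    by rewrite sum_nat_const card_ord mulnC.
  by apply: leq_sum => y _; rewrite ltnNge Hall.
Qed.

Lemma merge_lemma a b : 1 <= b -> g2t_KK a b <= 2 * b.+1 -> g2t_KK a b <= a + b ->
  g2t_KK a b <= g2t_KK a b.+1.
Proof.
move=> Hb H1 H2.
apply: gamma_mono; last by rewrite !card_prod !card_ord leq_mul2l ltnW ?orbT.
move=> S HS.
case: (leqP (g2t_KK a b) #|S|) => // Hlt.
pose col (y : 'I_b.+1) := [set x | (x, y) \in S].
have [k Hk] : exists k, #|col k| <= 1.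
  case: (boolP [exists k, #|col k| <= 1]) => [/existsP //|/existsPn Hall].
  exfalso; move: Hlt; apply/negP; rewrite -leqNgt.
  apply: (leq_trans H1); rewrite count_cols.
  apply: (@leq_trans (\sum_(y : 'I_b.+1) 2)).
    by rewrite sum_nat_const card_ord mulnC.
  by apply: leq_sum => y _; rewrite ltnNge Hall.
have [j' Hj'] : exists j' : 'I_b, forall x, (x, k) \in S -> (x, lift k j') \notin S.
  case: (set_0Vmem (col k)) => [E0|[a0 Ha0]].
    exists (Ordinal Hb); move=> x Hx; exfalso.
    have : x \in col k by rewrite inE.
    by rewrite E0 inE.
  have Hcol : forall x, (x, k) \in S -> x = a0.
    move=> x Hx; apply/eqP; apply/negPn/negP => Hne.
    have Hx' : x \in col k by rewrite inE.
    by have := leq_trans (two_le Hne Hx' Ha0) Hk.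
  case: (boolP [exists j', (a0, lift k j') \notin S]) => [/existsP [j' Hj']|/existsPn Hall].
    by exists j'; move=> x /Hcol ->.
  exfalso; move: Hlt; apply/negP; rewrite -leqNgt.
  apply: (leq_trans H2); rewrite count_rows (bigD1 a0) //=.
  have Hrow : #|[set y | (a0, y) \in S]| = b.+1.
    rewrite -[RHS](card_ord b.+1) -cardsT; apply: eq_card => y; rewrite !inE.
    case: (unliftP k y) => [z ->|->]; first by rewrite (negPn (Hall z)).
    by move: Ha0; rewrite inE.
  have Hoth : forall x, x != a0 -> 1 <= #|[set y | (x, y) \in S]|.
    move=> x Hx; rewrite card_gt0; apply/negP => /eqP E0.
    move: HS => /forallP /(_ (x, k)).
    apply/negP; rewrite -ltnNge.
    apply: (@leq_ltn_trans #|[set (a0, k)]|); last by rewrite cards1.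
    apply: subset_leq_card; apply/subsetP => [[x2 y2]].
    rewrite !inE /cart_rel /complete_rel /= => /andP [Hin /orP [/andP [/eqP Ex _]|/andP [/eqP Ey _]]].
      subst x2; have : y2 \in [set y | (x, y) \in S] by rewrite inE.
      by rewrite E0 inE.
    subst y2; by rewrite (Hcol _ Hin).
  have Hs : a.-1 <= \sum_(i < a | i != a0) #|[set y | (i, y) \in S]|.
    apply: (@leq_trans (\sum_(i < a | i != a0) 1)); last first.
      by apply: leq_sum => i Hi; exact: Hoth.
    rewrite sum1dep_card.
    have -> : [set x : 'I_a | x != a0] = [set~ a0] by apply/setP => x; rewrite !inE.
    by rewrite cardsC1 card_ord.
  rewrite Hrow; apply: (leq_trans _ (leq_add (leqnn _) Hs)).
  have := ltn_ord a0; lia.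
pose f (y : 'I_b.+1) : 'I_b := if unlift k y is Some z then z else j'.
have fK : forall z, f (lift k z) = z by move=> z; rewrite /f liftK.
have fk : f k = j' by rewrite /f unlift_none.
pose h (p : 'I_a * 'I_b.+1) : 'I_a * 'I_b := (p.1, f p.2).
have HS2 : total_k_dominating (E a b) 2 (h @: S).
  apply: (tkd_img HS).
  - move=> [x1 y1] [x2 y2] H1S H2S; rewrite /h /= => [[Ex Ef]]; subst x2.
    move: H1S H2S Ef; case: (unliftP k y1) => [z1 ->|->]; case: (unliftP k y2) => [z2 ->|->] //.
    + by rewrite !fK => _ _ ->.
    + rewrite fK fk => H1S H2S Ez; subst z1.
      by move: (Hj' _ H2S); rewrite H1S.
    + rewrite fK fk => H1S H2S Ez; subst z2.
      by move: (Hj' _ H1S); rewrite H2S.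
  - move=> u w Huw; exact: homE.
  - by move=> v; rewrite irrE.
  - by move=> [x z]; exists (x, lift k z); rewrite /h /= fK.
by move: Hlt; rewrite ltnNge (leq_trans (gamma_le HS2) (leq_imset_card _ _)).
Qed.


Theorem lemma5 (n m : nat) (h2n : 2 <= n) (hnm : n <= m) :
  (g2t_KK n m <= g2t_KK n m.+1 <= g2t_KK n m + 1) /\
  (g2t_KK n m <= g2t_KK n.+1 m <= g2t_KK n m + 2).
Proof.
have h2m : 2 <= m by lia.
have U1 := ubG h2n h2m.
have U2 : g2t_KK n m.+1 <= 2 * n by apply: ubG; lia.
have U3 : g2t_KK n.+1 m <= 2 * n.+1 by apply: ubG; lia.
split; apply/andP; split.
- apply: merge_lemma; lia.
- apply: dup => //; lia.
- rewrite (transp n m) (transp n.+1 m); apply: merge_lemma; try lia; rewrite (transp m n); lia.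
- rewrite transp (transp n); apply: dup => //; rewrite (transp m n.+1); lia.
Qed.
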